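(* Let $\lambda,\mu,\nu\in\mathcal{P}_k^+$. (i) The coefficient $f^\nu_{\lambda\mu}$ equals the cardinality of $\{(w,w')\in S^\lambda\times S^\mu:\lambda\circ w+\mu\circ w'=\nu\}$. (ii) $\chi_{\lambda/\mu}$ equals the cardinality of $\{w\in S^\mu:\mu_{w(i)}\le\lambda_i\text{ for all }i\in[k]\}$.
   Context: $[k]=\{1,\dots,k\}$. $\mathcal{P}_k^+$ is the set of $\lambda\in\mathbb{Z}^k$ with $\lambda_1\ge\cdots\ge\lambda_k\ge0$, identified with partitions having at most $k$ nonzero parts. $f^\nu_{\lambda\mu}$ is defined by $m_\lambda m_\mu=\sum_\nu f^\nu_{\lambda\mu}m_\nu$ in the ring of symmetric functions ($m_\lambda$ the monomial symmetric functions). For $\lambda\in\mathbb{Z}^k$ and $w\in S_k$, $\lambda\circ w=(\lambda_{w(1)},\dots,\lambda_{w(k)})$; $S_\lambda\subset S_k$ is the stabiliser of $\lambda$, and $S^\lambda$ is the set of minimal length (with respect to the simple transpositions) representatives of the right cosets $S_\lambda\backslash S_k$. For partitions $\lambda,\mu$ with conjugates $\lambda',\mu'$, $\chi_{\lambda/\mu}=\prod_{i\ge1}\binom{\lambda'_i-\mu'_{i+1}}{\mu'_i-\mu'_{i+1}}$ if $\mu\subset\lambda$ and $0$ otherwise. *)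

(* Defs.v *)
From HB Require Import structures.
From mathcomp Require Import all_boot all_order all_algebra all_fingroup.
From mathcomp Require Import mpoly.
Set Implicit Arguments. Unset Strict Implicit. Unset Printing Implicit Defensive.
Import GRing.Theory.

(* A vector lambda in Z^k (with nonnegative entries) is a finite function 'I_k -> nat. *)
Notation vec k := {ffun 'I_k -> nat}.

Definition dominant k (l : vec k) : Prop :=
  forall i j : 'I_k, (i <= j)%N -> (l j <= l i)%N.

Definition actv k (l : vec k) (w : {perm 'I_k}) : vec k := [ffun i => l (w i)].

(* the simple transposition s_j = (j j+1), used for j : 'I_k with j.+1 < k *)
Definition stransp k (j : 'I_k) : {perm 'I_k} := tperm j (insubd j j.+1).

Definition word_len k (w : {perm 'I_k}) (n : nat) : Prop :=
  exists s : seq 'I_k, [/\ size s = n, all (fun j : 'I_k => j.+1 < k)%N s &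
                          w = (\prod_(j <- s) stransp j)%g].

Definition len_le k (w v : {perm 'I_k}) : Prop :=
  forall n, word_len v n -> exists2 m, (m <= n)%N & word_len w m.

Definition stab k (l : vec k) (u : {perm 'I_k}) : Prop := actv l u = l.

(* the right coset S_lambda w = { u o w : u in S_lambda }; in mathcomp (w * u)%g
   is the map i |-> u (w i), i.e. the composition u o w *)
Definition in_rcoset k (l : vec k) (w v : {perm 'I_k}) : Prop :=
  exists2 u, stab l u & v = (w * u)%g.

Definition minrep k (l : vec k) (w : {perm 'I_k}) : Prop :=
  forall v, in_rcoset l w v -> len_le w v.

Definition card_is (T : finType) (P : T -> Prop) (c : nat) : Prop :=
  exists A : {set T}, (forall x, x \in A <-> P x) /\ #|A| = c.

Definition pad k n (l : vec k) : 'I_n -> nat :=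
  fun i => oapp l 0%N (insub (val i) : option 'I_k).
Arguments pad {k} n l _.

Definition msymm n (a : 'I_n -> nat) : {mpoly int[n]} :=
  (\sum_(m <- undup [seq [multinom a (s i) | i < n] | s : {perm 'I_n} <- enum {perm 'I_n}])
     'X_[m])%R.

(* f^nu_{lambda mu} computed in Lambda_n (n >= k): coefficient of m_nu in
   m_lambda m_mu, i.e. the coefficient of the monomial x^nu *)
Definition fcoef k n (l m v : vec k) : int :=
  ((msymm (pad n l) * msymm (pad n m)) @_ [multinom pad n v i | i < n])%R.

Definition conjp k (l : vec k) (i : nat) : nat := #|[set j : 'I_k | (i <= l j)%N]|.

Definition subpart k (m l : vec k) : bool := [forall j, (m j <= l j)%N].

(* Factors with i > lambda_1 are binom(0,0)=1 when mu ⊂ lambda,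
   so the product is taken over 1 <= i <= max_j lambda_j. *)
Definition chi k (l m : vec k) : nat :=
  if subpart m l then
    (\prod_(1 <= i < (\max_(j : 'I_k) l j).+1)
       'C(conjp l i - conjp m i.+1, conjp m i - conjp m i.+1))%N
  else 0%N.

(* Main.v *)
Require Import Defs.
From HB Require Import structures.
From mathcomp Require Import all_boot all_order all_algebra all_fingroup.
From mathcomp Require Import mpoly.
From mathcomp Require Import zify.
Set Implicit Arguments. Unset Strict Implicit. Unset Printing Implicit Defensive.

Section Perms.
Variable k : nat.
Implicit Types (w u v : {perm 'I_k}).

Lemma perm_mono_id (f : 'I_k -> nat) u :
  (forall x, f (u x) = f x) ->
  (forall x y : 'I_k, (x < y)%N -> f x = f y -> (u x < u y)%N) -> u = 1%g.
Proof.
move=> fu mono; apply/permP => x; rewrite perm1.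
suff H : forall n (x : 'I_k), val x = n -> u x = x by exact: (H _ x erefl).
elim/ltn_ind => n IH {}x xn.
case: (ltngtP (u x) x) => h; last exact: val_inj.
- have := IH (u x); rewrite -xn => /(_ h (u x) erefl) /perm_inj E.
  by rewrite E ltnn in h.
- set z := (u^-1)%g x.
  have uz : u z = x by rewrite /z permKV.
  case: (ltngtP z x) => hz.
  + have := IH z; rewrite -xn => /(_ hz z erefl); rewrite uz => E.
    by rewrite E ltnn in hz.
  + have fz : f x = f z by rewrite -(fu z) uz.
    have := mono x z hz fz; rewrite uz.
    by move=> /(ltn_trans h); rewrite ltnn.
  + by move/val_inj: hz => hz; rewrite hz in uz; rewrite uz ltnn in h.
Qed.

Definition canon (l : 'I_k -> nat) w : bool :=
  [forall i : 'I_k, forall j : 'I_k, ((i < j)%N && (l (w i) == l (w j))) ==> (w i < w j)%N].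

Lemma canonP (l : 'I_k -> nat) w :
  reflect (forall i j : 'I_k, (i < j)%N -> l (w i) = l (w j) -> (w i < w j)%N)
          (canon l w).
Proof.
apply: (iffP forallP) => [H i j ij E|H i].
  by have /forallP/(_ j)/implyP := H i; apply; rewrite ij E eqxx.
by apply/forallP => j; apply/implyP => /andP[ij /eqP E]; exact: H.
Qed.

Lemma canon_uniq (l : 'I_k -> nat) v1 v2 :
  canon l v1 -> canon l v2 -> (forall i, l (v1 i) = l (v2 i)) -> v1 = v2.
Proof.
move=> /canonP c1 /canonP c2 E.
have U : (v1^-1 * v2)%g = 1%g.
  apply: (@perm_mono_id l).
    by move=> x; rewrite permM -E permKV.
  move=> x y xy fxy; rewrite !permM.
  set i := (v1^-1)%g x; set j := (v1^-1)%g y.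
  have ex : v1 i = x by rewrite /i permKV.
  have ey : v1 j = y by rewrite /j permKV.
  have lij : l (v1 i) = l (v1 j) by rewrite ex ey.
  case: (ltngtP i j) => hij.
  - by apply: c2 => //; rewrite -!E.
  - by have := c1 _ _ hij (esym lij); rewrite ex ey ltnNge (ltnW xy).
  - by move/val_inj: hij => hij; rewrite -ex -ey hij ltnn in xy.
by apply/eqP; rewrite eq_mulVg1 U.
Qed.

Definition Phi w : nat := \sum_(i : 'I_k) i * w i.

Lemma canon_exists (l : 'I_k -> nat) w :
  exists2 w0, canon l w0 & forall i, l (w0 i) = l (w i).
Proof.
have P0 : [forall i, l (w i) == l (w i)] by apply/forallP => i.
case: (@arg_maxnP _ w (fun v : {perm 'I_k} => [forall i, l (v i) == l (w i)]) Phi P0) => w0 /forallP H0 Hmax.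
exists w0; last by move=> i; apply/eqP.
apply/canonP => i j ij E.
case: (ltngtP (w0 i) (w0 j)) => // h; last first.
  by move/val_inj/perm_inj: h => h; rewrite h ltnn in ij.
have ne : i != j by apply/eqP => e; rewrite e ltnn in ij.
set w1 := (tperm i j * w0)%g.
have P1 : [forall x, l (w1 x) == l (w x)].
  apply/forallP => x; rewrite permM; case: (tpermP i j x) => [->|->|_ _].
  - by rewrite -E H0.
  - by rewrite E H0.
  - by rewrite H0.
have e1 : Phi w1 = i * w0 j + (j * w0 i + \sum_(x | (x != i) && (x != j)) x * w0 x).
  rewrite /Phi (bigD1 i) //= (bigD1 j) 1?eq_sym //= !permM tpermL tpermR.
  congr (_ + (_ + _)); apply: eq_bigr => x /andP[xi xj].
  by rewrite permM tpermD // eq_sym.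
have e0 : Phi w0 = i * w0 i + (j * w0 j + \sum_(x | (x != i) && (x != j)) x * w0 x).
  by rewrite /Phi (bigD1 i) //= (bigD1 j) 1?eq_sym.
have := Hmax _ P1; rewrite e1 e0.
nia.
Qed.

End Perms.

Section Length.
Variable k : nat.
Implicit Types (w u v : {perm 'I_k}).

Definition invs w : {set 'I_k * 'I_k} := [set p : 'I_k * 'I_k | (p.1 < p.2)%N && (w p.2 < w p.1)%N].
Definition inv w := #|invs w|.

Lemma stranspE (x z : 'I_k) : (x.+1 < k)%N ->
  val (stransp x z) = if val z == val x then x.+1 else if val z == x.+1 then val x else val z.
Proof.
move=> hx; rewrite /stransp.
have vy : val (insubd x x.+1 : 'I_k) = x.+1 by rewrite val_insubd hx.
case: tpermP => [->|->|zx zy].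
- by rewrite eqxx vy.
- by rewrite vy eqxx; case: eqP => //; lia.
- have -> : (val z == val x) = false by apply/eqP => e; apply: zx; apply/val_inj.
  have -> : (val z == x.+1) = false.
    by apply/eqP => e; apply: zy; apply/val_inj; rewrite vy.
  by [].
Qed.

Lemma stransp2 (x : 'I_k) : (stransp x * stransp x)%g = 1%g.
Proof. exact: tperm2. Qed.

Definition spair (x : 'I_k) : 'I_k * 'I_k := (x, insubd x x.+1).

Lemma inv_step w (x : 'I_k) : (x.+1 < k)%N ->
  (#|invs w :\ spair x| <= #|invs (stransp x * w) :\ spair x|)%N.
Proof.
move=> hx.
set s := stransp x.
have sK : involutive s by move=> z; rewrite /s /stransp tpermK.
pose psi (p : 'I_k * 'I_k) := (s p.1, s p.2).
have psiI : injective psi.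
  by move=> [a b] [c d] [] /(can_inj sK) -> /(can_inj sK) ->.
rewrite -(card_imset _ psiI); apply: subset_leq_card.
apply/subsetP => q /imsetP [[a b] /= pin ->].
move: pin; rewrite !inE /= => /andP [pne /andP[ab wab]].
have vy : val (insubd x x.+1 : 'I_k) = x.+1 by rewrite val_insubd hx.
have ne : ~ (val a = val x /\ val b = x.+1).
  move=> [ea eb]; move/eqP: pne; apply.
  by rewrite /spair; congr pair; apply/val_inj => //; rewrite vy.
apply/andP; split; last (apply/andP; split).
- rewrite /spair xpair_eqE negb_and; apply/orP.
  have := stranspE a hx; have := stranspE b hx; rewrite -/s => Eb Ea.
  case: (boolP (s a == x)) => [/eqP sa|]; [right|by left].
  apply/eqP => sb; move/(congr1 val): sb; rewrite Eb vy.
  move/(congr1 val): sa; rewrite Ea.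
  by do ! (case: ifP => /eqP ?); move=> *; simpl in *; lia.
- rewrite /= (stranspE a hx) (stranspE b hx).
  by move: ne ab; do ! (case: ifP => /eqP ?); move=> *; simpl in *; lia.
- by rewrite /= !permM !sK.
Qed.

Lemma inv_le_step w (x : 'I_k) : (x.+1 < k)%N ->
  (inv (stransp x * w) <= inv w + 1)%N.
Proof.
move=> hx; have := inv_step (stransp x * w) hx.
rewrite mulgA stransp2 mul1g /inv => H.
rewrite (cardsD1 (spair x) (invs (stransp x * w))).
have : (#|invs w :\ spair x| <= #|invs w|)%N by apply: subset_leq_card; apply: subsetDl.
move=> h2; have h3 := leq_trans H h2.
case: (_ \in _) => /=; first by rewrite addnC leq_add2r.
by rewrite add0n; apply: leq_trans h3 (leq_addr 1 _).
Qed.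

Lemma inv_lt_step w (x : 'I_k) : (x.+1 < k)%N ->
  (w (insubd x x.+1) < w x)%N -> (inv (stransp x * w) < inv w)%N.
Proof.
move=> hx hw.
have vy : val (insubd x x.+1 : 'I_k) = x.+1 by rewrite val_insubd hx.
have sx : stransp x x = insubd x x.+1 by rewrite /stransp tpermL.
have sy : stransp x (insubd x x.+1) = x by rewrite /stransp tpermR.
have in1 : spair x \in invs w by rewrite inE /= vy ltnSn hw.
have in2 : spair x \notin invs (stransp x * w).
  by rewrite inE /= vy ltnSn /= !permM sx sy -leqNgt ltnW.
have := inv_step (stransp x * w) hx.
rewrite mulgA stransp2 mul1g /inv => H.
rewrite (cardsD1 (spair x) (invs w)) (cardsD1 (spair x) (invs (stransp x * w))).
by rewrite in1 (negbTE in2) /= add0n add1n ltnS.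
Qed.

Lemma inv1 : inv 1 = 0.
Proof.
rewrite /inv (_ : invs 1 = set0) ?cards0 //; apply/setP => p; rewrite !inE !perm1.
by case: ltngtP.
Qed.

Lemma word_inv w n : word_len w n -> (inv w <= n)%N.
Proof.
case=> s [<- al ->] {w n}.
elim: s al => [|x s IH] /=; first by rewrite big_nil inv1.
move=> /andP [hx al]; rewrite big_cons.
apply: leq_trans (inv_le_step (\prod_(j <- s) stransp j) hx) _.
by rewrite addn1 ltnS; exact: IH.
Qed.

Lemma mono_perm w :
  (forall x : 'I_k, (x.+1 < k)%N -> (w x < w (insubd x x.+1))%N) ->
  forall i j : 'I_k, (i < j)%N -> (w i < w j)%N.
Proof.
move=> H.
suff S : forall d (i j : 'I_k), (j : nat) = i + d.+1 -> (w i < w j)%N.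
  by move=> i j ij; apply: (S (j - i.+1)); lia.
elim=> [|d IH] i j E.
  have hi : (i.+1 < k)%N by have := ltn_ord j; lia.
  have -> : j = insubd i i.+1 by apply/val_inj; rewrite val_insubd hi /=; lia.
  exact: H.
have hj : (i + d.+1 < k)%N by have := ltn_ord j; lia.
apply: (@ltn_trans (w (Ordinal hj))); first exact: IH.
have hj' : ((Ordinal hj).+1 < k)%N by have := ltn_ord j; rewrite /=; lia.
have -> : j = insubd (Ordinal hj) (Ordinal hj).+1.
  by apply/val_inj; rewrite val_insubd hj' /=; lia.
exact: H.
Qed.

Lemma inv0_id w : inv w = 0 -> w = 1%g.
Proof.
move=> h0; apply: (@perm_mono_id k (fun _ => 0)) => // x y xy _.
case: (ltngtP (w x) (w y)) => // h.
  have : (x, y) \in invs w by rewrite inE /= xy h.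
  by move: h0; rewrite /inv => /eqP; rewrite cards_eq0 => /eqP ->; rewrite inE.
by move/val_inj/perm_inj: h => h; rewrite h ltnn in xy.
Qed.

Lemma inv_word w : exists2 m, (m <= inv w)%N & word_len w m.
Proof.
move: {2}(inv w) (leqnn (inv w)) => N; elim: N w => [|N IH] w hN.
  have -> : w = 1%g by apply: inv0_id; lia.
  by exists 0 => //; exists [::]; rewrite big_nil.
case: (pickP [pred x : 'I_k | (x.+1 < k)%N && (w (insubd x x.+1) < w x)%N]) => [x /andP [hx hw]|none].
  have lt := inv_lt_step hx hw.
  have [m hm [s [sz al E]]] := IH (stransp x * w)%g (leq_trans lt hN : (_ <= N)%N).
  exists m.+1; first by lia.
  exists (x :: s); split; first by rewrite /= sz.
    by rewrite /= hx al.
  by rewrite big_cons -E mulgA stransp2 mul1g.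
have -> : w = 1%g.
  apply: (@perm_mono_id k (fun _ => 0)) => // a b ab _.
  apply: mono_perm ab => x hx; have := none x; rewrite /= hx /=.
  case: (ltngtP (w (insubd x x.+1)) (w x)) => // h _.
  move/val_inj/perm_inj/(congr1 val): h; rewrite val_insubd hx /=; lia.
by exists 0 => //; exists [::]; rewrite big_nil.
Qed.

Lemma len_leP w v : len_le w v <-> (inv w <= inv v)%N.
Proof.
split.
  move=> H; have [n hn wn] := inv_word v.
  have [m mn wm] := H n wn; have := word_inv wm; lia.
move=> H n vn; have [m hm wm] := inv_word w; exists m => //.
have := word_inv vn; lia.
Qed.

Lemma dom_lt (l : vec k) (x y : 'I_k) : dominant l -> l x != l y ->
  (y < x)%N = (l x < l y)%N.
Proof.
move=> dl ne; case: (ltngtP y x) => h.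
- by have := dl _ _ (ltnW h); move: ne; case: ltngtP.
- by have := dl _ _ (ltnW h); move: ne; case: ltngtP.
- by move/val_inj: h => h; rewrite h eqxx in ne.
Qed.

Lemma inv_canon (l : vec k) v1 v2 : dominant l -> canon l v1 ->
  (forall i, l (v1 i) = l (v2 i)) ->
  (inv v1 <= inv v2)%N /\ (~~ canon l v2 -> (inv v1 < inv v2)%N).
Proof.
move=> dl c1 E.
set P := [set p : 'I_k * 'I_k | l (v1 p.1) == l (v1 p.2)].
have D : invs v1 :\: P = invs v2 :\: P.
  apply/setP => [[a b]]; rewrite !inE /= !E.
  case: (boolP (l (v2 a) == l (v2 b))) => [//|ne] /=.
  by rewrite (@dom_lt l (v1 a) (v1 b) dl) ?E // (@dom_lt l (v2 a) (v2 b) dl).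
have I1 : invs v1 :&: P = set0.
  apply/setP => [[a b]]; rewrite !inE /=.
  apply/negbTE; apply/negP => /andP [/andP [ab h] /eqP e].
  by have := (canonP _ _ c1) a b ab e; rewrite ltnNge (ltnW h).
have C1 := cardsID P (invs v1); have C2 := cardsID P (invs v2).
rewrite I1 cards0 D in C1.
rewrite /inv -C1 -C2 add0n; split; first exact: leq_addl.
case/forallPn => a /forallPn [b]; rewrite negb_imply => /andP [/andP [ab /eqP e] nab].
have ba : (v2 b < v2 a)%N.
  case: (ltngtP (v2 a) (v2 b)) nab => // h _.
  by move/val_inj/perm_inj: h => h; rewrite h ltnn in ab.
have : (a, b) \in invs v2 :&: P by rewrite !inE /= ab ba !E e eqxx.
move=> abin; have : (0 < #|invs v2 :&: P|)%N by apply/card_gt0P; exists (a, b).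
by move=> h; rewrite -[X in (X < _)%N]add0n ltn_add2r.
Qed.

Lemma in_rcosetP (l : vec k) w v : in_rcoset l w v <-> (forall i, l (v i) = l (w i)).
Proof.
split.
  case=> u su -> i; rewrite permM.
  by move/(congr1 (fun f : vec k => f (w i))): su; rewrite ffunE.
move=> H; exists (w^-1 * v)%g; last by rewrite mulKVg.
apply/ffunP => i; rewrite ffunE permM H permKV.
by [].
Qed.

Lemma minrep_canon (l : vec k) w : dominant l -> (minrep l w <-> canon l w).
Proof.
move=> dl; split.
  move=> mr; apply/negPn/negP => nc.
  have [w0 c0 e0] := canon_exists l w.
  have := mr w0 (proj2 (in_rcosetP l w w0) e0); move/len_leP.
  have [_ /(_ nc)] := inv_canon dl c0 e0; lia.
move=> c v /in_rcosetP E; apply/len_leP.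
by have [] := inv_canon dl c (fun i => esym (E i)).
Qed.
End Length.

Section Chi.
Variable k : nat.

Definition conjf (f : 'I_k -> nat) i := #|[set j : 'I_k | (i <= f j)%N]|.

Lemma conjf_pred (f : 'I_k -> nat) i : (0 < i)%N ->
  conjf (fun j => f j - 1) i = conjf f i.+1.
Proof.
move=> i0; apply: eq_card => j; rewrite !inE.
by apply/idP/idP => h; lia.
Qed.

Lemma conjf_mono (f : 'I_k -> nat) i : (conjf f i.+1 <= conjf f i)%N.
Proof.
apply: subset_leq_card; apply/subsetP => j; rewrite !inE; exact: ltnW.
Qed.

Lemma conjf_big (f : 'I_k -> nat) i : (forall j, f j < i)%N -> conjf f i = 0.
Proof.
move=> h; apply: eq_card0 => j; rewrite !inE; by rewrite leqNgt h.
Qed.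

Lemma conjf_ext (f g : 'I_k -> nat) i : f =1 g -> conjf f i = conjf g i.
Proof. by move=> e; apply: eq_card => j; rewrite !inE e. Qed.

Lemma card_between (T0 L : {set 'I_k}) m : T0 \subset L -> (#|T0| <= m)%N ->
  #|[set S : {set 'I_k} | [&& T0 \subset S, S \subset L & #|S| == m]]|
  = 'C(#|L| - #|T0|, m - #|T0|).
Proof.
move=> TL Tm.
have cLT : #|L :\: T0| = #|L| - #|T0| by rewrite cardsD (setIidPr TL).
rewrite -cLT -cards_draws.
set D := [set S : {set 'I_k} | _].
rewrite -(@card_in_imset _ _ (fun S => S :\: T0) D); last first.
  move=> S1 S2; rewrite !inE => /and3P [t1 _ _] /and3P [t2 _ _] e.
  apply/setP => x; case: (boolP (x \in T0)) => xT.
    by rewrite (subsetP t1 x xT) (subsetP t2 x xT).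
  by move/setP: e => /(_ x); rewrite !inE xT.
congr (#|pred_of_set _|); apply/setP => X; rewrite inE.
apply/imsetP/andP.
  move=> [S]; rewrite inE => /and3P [t1 t2 /eqP t3] ->; split.
    by apply: setSD.
  by rewrite cardsD (setIidPr t1) t3.
move=> [XL /eqP cX]; exists (X :|: T0); last first.
  apply/setP => x; rewrite !inE; case: (boolP (x \in T0)) => //= xT.
    by apply/negbTE/negP => xX; have := subsetP XL x xX; rewrite inE xT.
  by rewrite orbF.
have dis : X :&: T0 = set0.
  apply/setP => x; rewrite !inE; apply/negbTE; apply/negP => /andP [xX xT].
  by have := subsetP XL x xX; rewrite inE xT.
rewrite inE subsetUr /= cardsU dis cards0 subn0 cX subnK // eqxx andbT.
apply/subsetP => x; rewrite inE => /orP [xX|]; last exact: subsetP TL x.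
by have := subsetP XL x xX; rewrite inE => /andP [].
Qed.

End Chi.

Section Count.
Variable k : nat.
Variable c : nat.
Notation fT := {ffun 'I_k -> 'I_c.+1}.

Definition av (a : fT) : 'I_k -> nat := fun j => a j.

Definition goodb (lam mu : 'I_k -> nat) (a : fT) : bool :=
  [forall j, (a j <= lam j)%N] &&
  [forall i : 'I_c.+1, (0 < i)%N ==> (conjf (av a) i == conjf mu i)].

Lemma goodP (lam mu : 'I_k -> nat) (a : fT) : (forall j, lam j <= c)%N ->
  (forall i, 0 < i -> conjf mu i <= conjf lam i)%N ->
  reflect ((forall j, a j <= lam j)%N /\ forall i, (0 < i)%N -> conjf (av a) i = conjf mu i)
          (goodb lam mu a).
Proof.
move=> lc ml; apply: (iffP andP) => [[/forallP h1 /forallP h2]|[h1 h2]]; split.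
- exact h1.
- move=> i i0; case: (ltnP i c.+1) => ic.
    by have /implyP/(_ i0)/eqP := h2 (Ordinal ic).
  have e1 : conjf (av a) i = 0.
    by apply: conjf_big => j; have := ltn_ord (a j); rewrite /av; lia.
  have := ml i i0.
  rewrite (@conjf_big _ lam i) ?e1; first by lia.
  by move=> j; have := lc j; lia.
- by apply/forallP.
- by apply/forallP => i; apply/implyP => i0; apply/eqP; exact: h2.
Qed.

Definition decf (a : fT) : fT := [ffun j => inord (a j - 1)].

Lemma decfE a j : (decf a j : nat) = a j - 1.
Proof. by rewrite ffunE inordK //; have := ltn_ord (a j); lia. Qed.

Definition incf (b : fT) (S : {set 'I_k}) : fT := [ffun j => inord (b j + (j \in S))].

Definition supp (a : fT) : {set 'I_k} := [set j | (1 <= a j)%N].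

Lemma count_good b : forall lam mu : 'I_k -> nat,
  (forall j, lam j <= b)%N -> (forall j, lam j <= c)%N ->
  (forall i, 0 < i -> conjf mu i <= conjf lam i)%N ->
  #|[set a | goodb lam mu a]| =
  \prod_(1 <= i < b.+1) 'C(conjf lam i - conjf mu i.+1, conjf mu i - conjf mu i.+1).
Proof.
elim: b => [|b IH] lam mu lb lc ml.
  rewrite big_geq //.
  have mu0 : forall j, mu j = 0.
    move=> j; apply/eqP; rewrite -leqn0; apply/negPn/negP; rewrite -ltnNge => mj.
    have := ml _ mj; rewrite (@conjf_big _ lam) => [|j']; last by have := lb j'; lia.
    by rewrite leqn0 cards_eq0 => /eqP /setP /(_ j); rewrite !inE leqnn.
  pose a0 : fT := [ffun _ => ord0].
  rewrite -(cards1 a0); apply: eq_card => a; rewrite !inE.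
  apply/(@goodP lam mu _ lc ml)/eqP => [[h1 _]|->].
    apply/ffunP => j; rewrite ffunE; apply/val_inj => /=.
    by have := h1 j; have := lb j; lia.
  split => [j|i i0]; first by rewrite ffunE.
  rewrite (@conjf_big _ mu) ?(@conjf_big _ (av a0)) // => j; rewrite /av ?ffunE /= ?mu0; lia.
pose lam1 := fun j => lam j - 1; pose mu1 := fun j => mu j - 1.
have lb1 : forall j, (lam1 j <= b)%N by move=> j; have := lb j; rewrite /lam1; lia.
have lc1 : forall j, (lam1 j <= c)%N by move=> j; have := lc j; rewrite /lam1; lia.
have ml1 : forall i, (0 < i -> conjf mu1 i <= conjf lam1 i)%N.
  by move=> i i0; rewrite !conjf_pred //; exact: ml.
have IHb := IH lam1 mu1 lb1 lc1 ml1.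
rewrite big_ltn // big_add1 /=.
rewrite (@eq_big_nat _ _ _ _ _ _ (fun i => 'C(conjf lam1 i - conjf mu1 i.+1, conjf mu1 i - conjf mu1 i.+1))); last first.
  by move=> i /andP [i0 _]; rewrite !conjf_pred.
rewrite -IHb.
set A := [set a | goodb lam mu a]; set B := [set a | goodb lam1 mu1 a].
have decB : forall a, a \in A -> decf a \in B.
  move=> a; rewrite !inE => /(@goodP lam mu _ lc ml) [h1 h2].
  apply/(@goodP lam1 mu1 _ lc1 ml1); split => [j|i i0].
    by rewrite decfE /lam1; have := h1 j; lia.
  rewrite (@conjf_ext _ (av (decf a)) (fun j => av a j - 1)); last first.
    by move=> j; rewrite /av decfE.
  by rewrite conjf_pred // h2 // -conjf_pred.
rewrite -[#|A|]sum1_card (partition_big (@decf) (mem B)) /=; last exact: decB.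
rewrite mulnC -sum_nat_const; apply: eq_bigr => bt btB.
transitivity #|[set a in A | decf a == bt]|.
  by rewrite -sum1_card; apply: eq_bigl => a; rewrite !inE.
move: (btB); rewrite inE => /(@goodP lam1 mu1 _ lc1 ml1) [hb1 hb2].
set F := [set a in A | decf a == bt].
set T0 := supp bt; set L := [set j : 'I_k | (1 <= lam j)%N].
have TL : T0 \subset L.
  apply/subsetP => j; rewrite !inE => h; have := hb1 j; rewrite /lam1; lia.
have cT : #|T0| = conjf mu 2.
  by rewrite -conjf_pred // -/mu1 -hb2.
have cL : #|L| = conjf lam 1 by [].
have Tm : (#|T0| <= conjf mu 1)%N by rewrite cT; exact: conjf_mono.
rewrite -cL -cT -(card_between TL Tm).
have bt0 : forall j, j \notin T0 -> (bt j : nat) = 0.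
  by move=> j; rewrite inE; lia.
rewrite -(@card_in_imset _ _ supp F).
  congr (#|pred_of_set _|); apply/setP => S; rewrite inE.
  apply/imsetP/and3P.
    move=> [a]; rewrite !inE => /andP [aA /eqP da] ->.
    move: aA => /(@goodP lam mu _ lc ml) [h1 h2].
    split.
    - apply/subsetP => j; rewrite !inE -da decfE; lia.
    - by apply/subsetP => j; rewrite !inE => h; have := h1 j; lia.
    - by rewrite -h2.
  move=> [t1 t2 /eqP t3].
  have incE : forall j, (incf bt S j : nat) = bt j + (j \in S).
    move=> j; rewrite ffunE inordK //.
    case: (boolP (j \in S)) => jS /=.
      have := subsetP t2 j jS; rewrite inE => lj.
      by have := hb1 j; have := lc j; rewrite /lam1; lia.
    by have := ltn_ord (bt j); lia.
  have suppE : supp (incf bt S) = S.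
    apply/setP => j; rewrite inE incE.
    case: (boolP (j \in S)) => jS /=; first by lia.
    have jT : j \notin T0 by apply: contra jS; apply: (subsetP t1).
    by rewrite bt0 //.
  exists (incf bt S) => //; rewrite !inE; apply/andP; split.
    apply/(@goodP lam mu _ lc ml); split => [j|i i0].
      rewrite incE; case: (boolP (j \in S)) => jS /=.
        have := subsetP t2 j jS; rewrite inE => lj.
        by have := hb1 j; rewrite /lam1; lia.
      by rewrite bt0 ?addn0 //; apply: contra jS; apply: (subsetP t1).
    case: (ltngtP i 1) => [|i1|i1]; first by lia.
      have e : conjf (av (incf bt S)) i = conjf (av bt) i.-1.
        apply: eq_card => j; rewrite !inE /av incE.
        case: (boolP (j \in S)) => jS /=; first by lia.
        by rewrite bt0 /=; [lia| apply: contra jS; apply: (subsetP t1)].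
      rewrite e hb2; last by lia.
      by rewrite /mu1 conjf_pred ?prednK //; lia.
    by rewrite i1 -t3 -[in RHS]suppE.
  apply/eqP/ffunP => j; apply/val_inj; rewrite /= decfE incE /=.
  case: (boolP (j \in S)) => jS /=; first by lia.
  by rewrite bt0 //; apply: contra jS; apply: (subsetP t1).
move=> a1 a2; rewrite !inE => /andP [_ /eqP d1] /andP [_ /eqP d2] /setP e.
apply/ffunP => j; apply/val_inj; have := e j; rewrite !inE.
move/ffunP: (etrans d1 (esym d2)) => /(_ j) /(congr1 val) /=; rewrite !decfE /=.
by case: (boolP (1 <= a1 j)%N); case: (boolP (1 <= a2 j)%N) => //= ? ? ? ?; lia.
Qed.

End Count.

Lemma count_card (T : finType) (p : pred T) : count p (enum T) = #|[set x | p x]|.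
Proof. rewrite cardE /enum_mem size_filter (@eq_filter _ _ predT); last by [].
rewrite filter_predT. apply: eq_count. move=> x /=. by rewrite inE. Qed.

Lemma count_card2 (T : finType) (p : pred T) : count p (Finite.enum T) = #|[set x | p x]|.
Proof. rewrite cardE /enum_mem size_filter. apply: eq_count. move=> y /=. by rewrite inE. Qed.

Section Final2.
Variable k : nat.

Lemma card_eqv (f : 'I_k -> nat) x : #|[set j | f j == x]| = conjf f x - conjf f x.+1.
Proof.
rewrite /conjf -(cardsID [set j | x.+1 <= f j] [set j | x <= f j]).
have -> : [set j | x <= f j] :&: [set j | x.+1 <= f j] = [set j | x.+1 <= f j].
  by apply/setIidPr/subsetP => j; rewrite !inE; exact: ltnW.
rewrite addKn; apply: eq_card => j; rewrite !inE.
by case: ltngtP.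
Qed.

Lemma rearr (a mm : 'I_k -> nat) : (forall i, conjf a i = conjf mm i) ->
  exists p : {perm 'I_k}, forall j, a j = mm (p j).
Proof.
move=> E.
have pe : perm_eq [seq a j | j <- enum 'I_k] [tuple mm j | j < k].
  rewrite /perm_eq; apply/allP => x _; apply/eqP.
  rewrite !count_map !count_card2.
  by rewrite (card_eqv a x) (card_eqv mm x) !E.
case/tuple_permP: pe => p ep; exists p => j.
move: ep; rewrite /= => /eq_in_map /(_ j (mem_enum _ j)).
by rewrite tnth_mktuple.
Qed.

Lemma conjf_perm (f : 'I_k -> nat) (w : {perm 'I_k}) i :
  conjf (fun j => f (w j)) i = conjf f i.
Proof.
rewrite /conjf -(card_preimset [set j | (i <= f j)%N] (@perm_inj _ w)).
apply: eq_card => j.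
by rewrite !inE.
Qed.

Lemma card_prefix n : (n <= k)%N -> #|[set j : 'I_k | (j < n)%N]| = n.
Proof.
move=> nk.
have wi : injective (widen_ord nk) by move=> x y /(congr1 val) /= e; apply/val_inj.
rewrite -[in RHS](card_ord n) -(card_imset _ wi).
apply: eq_card => j; rewrite !inE; apply/idP/imsetP => [jn|[i _ ->]] //=.
by exists (Ordinal jn) => //; apply/val_inj.
Qed.

Lemma subpart_of_conj (l m : vec k) : dominant l -> dominant m ->
  (forall i, conjf m i <= conjf l i)%N -> subpart m l.
Proof.
move=> dl dm H; apply/forallP => j; rewrite leqNgt; apply/negP => mj.
have h := H (l j).+1.
have h1 : (j.+1 <= conjf m (l j).+1)%N.
  rewrite -(card_prefix (ltn_ord j)); apply: subset_leq_card; apply/subsetP => j'.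
  rewrite !inE ltnS => jj; exact: leq_trans mj (dm _ _ jj).
have h2 : (conjf l (l j).+1 <= j)%N.
  rewrite -[X in (_ <= X)%N](card_prefix (ltnW (ltn_ord j))); apply: subset_leq_card.
  apply/subsetP => j'; rewrite !inE => h'.
  rewrite ltnNge; apply/negP => jj; have := dl _ _ jj; lia.
lia.
Qed.

Lemma part2 (l m : vec k) : dominant l -> dominant m ->
  card_is (fun w : {perm 'I_k} => minrep m w /\ forall i, (m (w i) <= l i)%N) (chi l m).
Proof.
move=> dl dm.
pose W := [set w : {perm 'I_k} | canon m w && [forall i, m (w i) <= l i]].
exists W; split.
  move=> w; rewrite inE; split.
    by move=> /andP [c /forallP h]; split => //; apply/(minrep_canon w dm).
  by move=> [mr h]; apply/andP; split; [apply/(minrep_canon w dm)|apply/forallP].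
rewrite /chi; case: ifP => sub; last first.
  apply: eq_card0 => w; rewrite inE; apply/negP => /andP [_ /forallP h].
  move/negbT: sub => /negP; apply; apply: subpart_of_conj => // i.
  rewrite -(conjf_perm m w); apply: subset_leq_card; apply/subsetP => j.
  by rewrite !inE => hj; exact: leq_trans hj (h j).
set B := \max_(j : 'I_k) l j.
have lb : forall j, (l j <= B)%N by move=> j; exact: (leq_bigmax j).
have ml : forall i, (0 < i -> conjf m i <= conjf l i)%N.
  move=> i _; apply: subset_leq_card; apply/subsetP => j; rewrite !inE => hj.
  by move/forallP: sub => /(_ j); exact: leq_trans hj.
have := @count_good k B B l m lb lb ml; rewrite /conjf /conjp => <-.
pose phi (w : {perm 'I_k}) : {ffun 'I_k -> 'I_B.+1} := [ffun j => inord (m (w j))].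
have phiE : forall w, w \in W -> forall j, (phi w j : nat) = m (w j).
  move=> w; rewrite inE => /andP [_ /forallP h] j; rewrite ffunE inordK //.
  by rewrite ltnS; exact: leq_trans (h j) (lb j).
rewrite -(@card_in_imset _ _ phi W); last first.
  move=> w1 w2 h1 h2 e; apply: (@canon_uniq _ m).
  - by move: h1; rewrite inE => /andP [].
  - by move: h2; rewrite inE => /andP [].
  - by move=> i; rewrite -(phiE _ h1) -(phiE _ h2) e.
apply: eq_card => a; rewrite inE; apply/imsetP/idP.
  move=> [w wW ->]; apply/(@goodP k B l m _ lb ml); split => [j|i i0].
    by rewrite phiE //; move: wW; rewrite inE => /andP [_ /forallP].
  rewrite (@conjf_ext _ _ (fun j => m (w j))); first exact: conjf_perm.
  by move=> j; rewrite /av phiE.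
move=> /(@goodP k B l m _ lb ml) [h1 h2].
have [p hp] : exists p : {perm 'I_k}, forall j, av a j = m (p j).
  apply: rearr => i; case: (posnP i) => [->|i0]; last exact: h2.
  by rewrite /conjf; apply: eq_card => j; rewrite !inE.
have [w cw ew] := canon_exists m p.
have wW : w \in W.
  rewrite inE cw /=; apply/forallP => j; rewrite ew -hp; exact: h1.
exists w => //; apply/ffunP => j; apply/val_inj; rewrite /= phiE // ew -hp.
by [].
Qed.

End Final2.

Import GRing.Theory.

Section Part1.
Variables (k n : nat).
Hypothesis kn : (k <= n)%N.

Definition Sl (a : 'I_n -> nat) : seq 'X_{1..n} :=
  undup [seq [multinom a (s i) | i < n] | s : {perm 'I_n} <- enum {perm 'I_n}].

Definition gm (a : vec k) (w : {perm 'I_k}) : 'X_{1..n} :=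
  [multinom pad n (actv a w) i | i < n].

Lemma memS (a : 'I_n -> nat) (x : 'X_{1..n}) :
  (x \in Sl a) = perm_eq x [tuple a i | i < n].
Proof.
rewrite mem_undup; apply/mapP/tuple_permP => [[s _ ->]|[p hp]].
  exists s => /=; apply: eq_map => i; by rewrite tnth_mktuple.
exists p; first by rewrite mem_enum.
have ht : multinom_val x = [tuple tnth [tuple a i | i < n] (p j) | j < n] by apply: val_inj.
by apply/mnmP => i; rewrite mnmE mnm_tnth ht !tnth_mktuple.
Qed.

Lemma padW (f : vec k) (j : 'I_k) : pad n f (widen_ord kn j) = f j.
Proof.
rewrite /pad /= (insubT (fun x => x < k)%N (ltn_ord j)) /=.
by congr (f _); apply/val_inj.
Qed.

Lemma padbig (f : vec k) (i : 'I_n) : (k <= i)%N -> pad n f i = 0.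
Proof. by move=> ki; rewrite /pad insubN // -leqNgt. Qed.

Lemma nseq0 h m k' : (forall x, k' <= x -> h x = 0)%N ->
  [seq h x | x <- iota k' m] = nseq m 0.
Proof.
elim: m k' => [//|m IH] k' H /=; rewrite H // IH // => x hx; apply: H; lia.
Qed.

Lemma padseq (f : vec k) :
  [seq pad n f i | i <- enum 'I_n] = [seq f j | j <- enum 'I_k] ++ nseq (n - k) 0.
Proof.
pose h (x : nat) := oapp f 0 (insub x : option 'I_k).
have -> : [seq pad n f i | i <- enum 'I_n] = [seq h x | x <- map val (enum 'I_n)].
  by rewrite -map_comp.
rewrite val_enum_ord -(subnKC kn) iotaD map_cat add0n subnKC //; congr (_ ++ _).
  rewrite -val_enum_ord -map_comp; apply: eq_map => j /=.
  by rewrite /h valK.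
by apply: nseq0 => x kx; rewrite /h insubN // -leqNgt.
Qed.

Lemma gS (a : vec k) (w : {perm 'I_k}) : gm a w \in Sl (pad n a).
Proof.
rewrite memS /= padseq padseq perm_cat2r.
have -> : [seq actv a w j | j <- enum 'I_k] = [seq a j | j <- [seq w j | j <- enum 'I_k]].
  by elim: (enum 'I_k) => //= j s ->; rewrite ffunE.
apply: perm_map; apply: uniq_perm.
- by rewrite map_inj_uniq ?enum_uniq //; exact: perm_inj.
- exact: enum_uniq.
- by move=> j; rewrite mem_enum; apply/mapP; exists ((w^-1)%g j); rewrite ?mem_enum ?permKV.
Qed.

Lemma Sg (a : vec k) (x : 'X_{1..n}) : x \in Sl (pad n a) ->
  (forall i : 'I_n, k <= i -> x i = 0)%N -> exists2 w, canon a w & x = gm a w.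
Proof.
move=> xS xb.
pose xk : vec k := [ffun j => x (widen_ord kn j)].
have xp : forall i, x i = pad n xk i.
  move=> i; case: (ltnP i k) => ik; last by rewrite padbig ?xb.
  have -> : i = widen_ord kn (Ordinal ik) by apply/val_inj.
  by rewrite padW ffunE.
have xE : (x : seq nat) = [seq pad n xk i | i <- enum 'I_n].
  by rewrite -[LHS](map_tnth_enum x); apply: eq_map => i /=; rewrite -mnm_tnth xp.
move: xS; rewrite memS xE /= padseq padseq perm_cat2r => pe.
have pe' : perm_eq [seq xk j | j <- enum 'I_k] [tuple a j | j < k] by [].
case/tuple_permP: pe' => p hp.
have ep : forall j, xk j = a (p j).
  move=> j; move: hp; rewrite /= => /eq_in_map /(_ j (mem_enum _ j)).
  by rewrite tnth_mktuple.
have [w cw ew] := canon_exists a p.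
exists w => //; apply/mnmP => i; rewrite mnmE xp; congr (pad n _ i).
by apply/ffunP => j; rewrite !ffunE ew -ep ffunE.
Qed.

Lemma gm_inj (a : vec k) w1 w2 : gm a w1 = gm a w2 -> forall j, a (w1 j) = a (w2 j).
Proof.
move/mnmP => e j; have := e (widen_ord kn j); rewrite !mnmE !padW !ffunE.
by [].
Qed.

Lemma reindex (a : vec k) (F : 'X_{1..n} -> int) :
  (forall x, (F x != 0)%R -> forall i : 'I_n, (k <= i)%N -> x i = 0) ->
  (\sum_(x <- Sl (pad n a)) F x = \sum_(w in [set w | canon a w]) F (gm a w))%R.
Proof.
move=> HF.
set W := [set w | canon a w]; set G := [seq gm a w | w <- enum W].
rewrite (bigID (fun x => x \in G)) /=.
rewrite [X in (_ + X)%R]big1_seq ?addr0; last first.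
  move=> x /andP [nG xS]; apply/eqP/negPn/negP => Fx.
  have [w cw ew] := Sg xS (HF x Fx).
  by move/negP: nG; apply; rewrite ew map_f // mem_enum inE.
rewrite -big_filter (perm_big G); last first.
  apply: uniq_perm.
  - by rewrite filter_uniq ?undup_uniq.
  - rewrite map_inj_in_uniq ?enum_uniq // => w1 w2; rewrite !mem_enum !inE => c1 c2 e.
    by apply: canon_uniq c1 c2 _; exact: gm_inj.
  - move=> x; rewrite mem_filter; apply/andP/idP => [[]//|xG]; split=> //.
    by move/mapP: xG => [w _ ->]; exact: gS.
by rewrite big_map big_enum.
Qed.

End Part1.

Lemma msymmE n (a : 'I_n -> nat) : msymm a = (\sum_(x <- Sl a) 'X_[x])%R.
Proof. by []. Qed.

Lemma part1 k n (kn : (k <= n)%N) (l m v : vec k) : dominant l -> dominant m ->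
  exists c : nat,
    card_is (fun p : {perm 'I_k} * {perm 'I_k} =>
               [/\ minrep l p.1, minrep m p.2 &
                   forall i, actv l p.1 i + actv m p.2 i = v i])%N c
    /\ fcoef n l m v = Posz c.
Proof.
move=> dl dm.
pose A := [set p : {perm 'I_k} * {perm 'I_k} |
            [&& canon l p.1, canon m p.2 & [forall i, l (p.1 i) + m (p.2 i) == v i]]].
exists #|A|; split.
  exists A; split => // p; rewrite inE; split.
    move=> /and3P [c1 c2 /forallP h]; split.
    - exact/(minrep_canon _ dl).
    - exact/(minrep_canon _ dm).
    - by move=> i; rewrite !ffunE; apply/eqP.
  move=> [m1 m2 h]; apply/and3P; split.
  - exact/(minrep_canon _ dl).
  - exact/(minrep_canon _ dm).
  - by apply/forallP => i; have := h i; rewrite !ffunE => ->.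
set mv := [multinom pad n v i | i < n].
have key : forall x y : 'X_{1..n}, (x + y)%MM = mv -> forall i : 'I_n, (k <= i)%N -> x i = 0 /\ y i = 0.
  by move=> x y /mnmP e i ki; have := e i; rewrite mnmDE mnmE padbig //; lia.
rewrite /fcoef !msymmE -/mv big_distrlr /= raddf_sum.
transitivity (\sum_(x <- Sl (pad n l)) \sum_(y <- Sl (pad n m)) (((x + y)%MM == mv)%:R : int))%R.
  apply: eq_bigr => x _; rewrite raddf_sum; apply: eq_bigr => y _.
  by rewrite -mpolyXD; exact: mcoeffX.
rewrite (reindex kn); last first.
  move=> x Fx i ki; apply/eqP/negPn/negP => xi; move/negP: Fx; apply; apply/eqP.
  apply: big1_seq => y _.
  have -> : ((x + y)%MM == mv) = false.
    by apply/negbTE/negP => /eqP /key /(_ i ki) [x0 _]; rewrite x0 eqxx in xi.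
  by [].
rewrite (eq_bigr (fun w => \sum_(w' in [set w | canon m w]) (((gm n l w + gm n m w')%MM == mv)%:R : int))%R); last first.
  move=> w _; apply: (reindex kn) => y Fy i ki; apply/eqP/negPn/negP => yi.
  move/negP: Fy; apply.
  have -> : ((gm n l w + y)%MM == mv) = false.
    by apply/negbTE/negP => /eqP /key /(_ i ki) [_ y0]; rewrite y0 eqxx in yi.
  by [].
rewrite pair_big /=.
have eqb : forall w w', ((gm n l w + gm n m w')%MM == mv) = [forall i, l (w i) + m (w' i) == v i].
  move=> w w'; apply/eqP/forallP => [/mnmP e i|h].
    by have := e (widen_ord kn i); rewrite mnmDE !mnmE !padW !ffunE => ->.
  apply/mnmP => i; rewrite mnmDE !mnmE; case: (ltnP i k) => ik; last by rewrite !padbig.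
  have -> : i = widen_ord kn (Ordinal ik) by apply/val_inj.
  by rewrite !padW !ffunE; apply/eqP/h.
rewrite (eq_bigr (fun p => ((p \in A) : nat)%:R))%R; last first.
  by move=> p; rewrite !inE => /andP [h1 h2]; rewrite eqb h1 h2.
rewrite -natr_sum natz; congr Posz.
rewrite (eq_bigr (fun p => if p \in A then 1 else 0)) => [|p _]; last by case: (p \in A).
rewrite -big_mkcondr -sum1_card; apply: eq_bigl => p; rewrite !inE.
by case: (canon l p.1); case: (canon m p.2).
Qed.

Theorem mainTheorem7 (k : nat) (l m v : {ffun 'I_k -> nat}) :
  dominant l -> dominant m -> dominant v ->
  (forall n : nat, (k <= n)%N ->
     exists c : nat,
       card_is (fun p : {perm 'I_k} * {perm 'I_k} =>
                  [/\ minrep l p.1, minrep m p.2 &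
                      forall i, actv l p.1 i + actv m p.2 i = v i])%N c
       /\ fcoef n l m v = Posz c)
  /\
  card_is (fun w : {perm 'I_k} => minrep m w /\ forall i, (m (w i) <= l i)%N)
          (chi l m).
Proof.
move=> dl dm _; split; last exact: part2.
by move=> n kn; apply: part1.
Qed.
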